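(* Let $\eta,\tau>0$ and $\nu\in\mathbb{R}$. For $\mu\in\mathbb{R}$ let $p_\mu(z)=\tau+(2\eta+2\mu-\tau)z+(2\eta-2\mu-\tau)z^2+\tau z^3$. Suppose $p_{\nu}$ has a root $\Omega_+$ in the open upper half-plane $\{\Im z>0\}$. Then $p_{-\nu}$ has exactly one root $\Omega_-$ in the open upper half-plane, and $\overline{\Omega_+}\,\Omega_-=1$.
   Context: $p_\mu$ is the numerator of $\partial_z G(\mu,\eta,\tau,z)=p_\mu(z)/(2z^2(z-1))$ for $G(\mu,\eta,\tau,z)=\tau\frac{z+z^{-1}}{2}+\eta\log\big(\frac{z+z^{-1}}{2}-1\big)-\mu\log z$; in the paper $\Omega(\mu,\eta,\tau)$ denotes the root of $p_\mu$ in the upper half-plane, and $\Omega_\pm=\Omega(\pm\nu,\eta,\tau)$. *)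

(* Defs.v *)
From mathcomp Require Import all_boot all_order all_algebra.
From mathcomp Require Import complex.
Set Implicit Arguments. Unset Strict Implicit. Unset Printing Implicit Defensive.
Import Order.TTheory GRing.Theory Num.Theory.
Local Open Scope ring_scope.
Local Open Scope complex_scope.

Definition pmu (R : rcfType) (eta tau mu : R) : {poly R[i]} :=
  (tau%:C)%:P
  + ((2 * eta + 2 * mu - tau)%:C)%:P * 'X
  + ((2 * eta - 2 * mu - tau)%:C)%:P * 'X ^+ 2
  + (tau%:C)%:P * 'X ^+ 3.

(* Main.v *)
Require Import Defs.
From mathcomp Require Import all_boot all_order all_algebra.
From mathcomp Require Import complex.
From mathcomp Require Import zify ring lra.
Set Implicit Arguments.
Import Order.TTheory GRing.Theory Num.Theory.
Local Open Scope ring_scope.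
Local Open Scope complex_scope.
Lemma hornP (R : rcfType) (eta tau mu : R) z : (pmu eta tau mu).[z] =
  tau%:C + (2 * eta + 2 * mu - tau)%:C * z + (2 * eta - 2 * mu - tau)%:C * z^+2 + tau%:C * z^+3.
Proof. by rewrite /pmu !hornerE. Qed.
Lemma sizeCM (F : nzSemiRingType) (c : F) q : (size (c%:P * q)%R <= size q)%N.
Proof. apply: leq_trans (size_polyMleq _ _) _; have := size_polyC_leq1 c; lia. Qed.
Lemma sizeP (R : rcfType) (eta tau mu : R) : (size (pmu eta tau mu) <= 4)%N.
Proof.
rewrite /pmu.
repeat (apply: leq_trans (size_polyD _ _) _; rewrite geq_max; apply/andP; split).
all: try (apply: leq_trans (size_polyC_leq1 _) _; done).
all: by rewrite (leq_trans (sizeCM _ _)) // ?size_polyXn ?size_polyX.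
Qed.
Lemma pmu_neq0 (R : rcfType) (eta tau mu : R) : 0 < tau -> pmu eta tau mu != 0.
Proof.
move=> ht; apply/negP => /eqP h.
have := hornP eta tau mu 0; rewrite h horner0 !(expr0n, mulr0, addr0) /=.
move/(congr1 (@complex.Re R)) => /= h0; move: ht; by rewrite -h0 ltxx.
Qed.
Lemma ImJ (R : rcfType) (x : R[i]) : complex.Im (x^*) = - complex.Im x. Proof. by case: x. Qed.
Lemma root_conj (R : rcfType) (eta tau mu : R) x :
  root (pmu eta tau mu) x -> root (pmu eta tau mu) x^*.
Proof.
rewrite /root !hornP => /eqP h; apply/eqP.
move: h; set a := (_ + _ - _)%:C; set b := (_ - _ - _)%:C; set t := tau%:C => h.
have ha : a^* = a by rewrite conjc_real.
have hb : b^* = b by rewrite conjc_real.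
have ht : t^* = t by rewrite conjc_real.
have e : (t + a * x + b * x ^+ 2 + t * x ^+ 3)^* = t + a * x^* + b * x^* ^+ 2 + t * x^* ^+ 3.
  rewrite !rmorphD !rmorphM -[in RHS]ha -[in RHS]hb -[in RHS]ht.
  reflexivity.
by rewrite -e h conjc0.
Qed.
Lemma root_inv (R : rcfType) (eta tau mu : R) x : 0 < tau ->
  root (pmu eta tau mu) x -> root (pmu eta tau (- mu)) x^-1.
Proof.
move=> ht; rewrite /root !hornP => /eqP h; apply/eqP.
have x0 : x != 0.
  apply/negP => /eqP x0; move: h; rewrite x0 !(expr0n, mulr0, addr0) /=.
  move/(congr1 (@complex.Re R)) => /= h0; move: ht; by rewrite -h0 ltxx.
have e1 : (2 * eta + 2 * - mu - tau) = (2 * eta - 2 * mu - tau) by ring.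
have e2 : (2 * eta - 2 * - mu - tau) = (2 * eta + 2 * mu - tau) by ring.
rewrite e1 e2.
move: h; set a := (_ + _ - _)%:C; set b := (_ - _ - _)%:C; set t := tau%:C => h.
have : (t + b * x^-1 + a * x^-1 ^+ 2 + t * x^-1 ^+ 3) * x ^+ 3 = 0.
  rewrite -h; field; done.
by move/eqP; rewrite mulf_eq0 expf_eq0 (negbTE x0) andbF orbF => /eqP.
Qed.
Lemma neqIm (R : rcfType) (x y : R[i]) : complex.Im x < complex.Im y -> x != y.
Proof. by move=> h; apply/negP => /eqP e; move: h; rewrite e ltxx. Qed.

Theorem lemma3p3 (R : rcfType) (eta tau nu : R)
  (heta : 0 < eta) (htau : 0 < tau)
  (Wp : R[i]) (hWp : root (pmu eta tau nu) Wp) (hImWp : 0 < complex.Im Wp) :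
  exists Wm : R[i],
    [/\ root (pmu eta tau (- nu)) Wm, 0 < complex.Im Wm,
        (forall w : R[i], root (pmu eta tau (- nu)) w -> 0 < complex.Im w -> w = Wm)
      & (Wp^* * Wm = 1)].
Proof.
have hJ : Wp^* != 0.
  apply: neqIm; rewrite ImJ /=; lra.
have hIm : 0 < complex.Im (Wp^*)^-1.
  case: Wp hImWp {hJ hWp} => a b /= hb.
  rewrite mulNr opprK sqrrN; apply: divr_gt0 => //.
  by rewrite ltr_pwDr ?exprn_gt0 ?sqr_ge0.
have hr : root (pmu eta tau (- nu)) (Wp^*)^-1.
  by apply: root_inv => //; apply: root_conj.
exists (Wp^*)^-1; split => //.
- move=> w hw hImw; apply/eqP; apply: contraT => hne.
  set Wm := (Wp^*)^-1 in hr hIm hne.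
  have hall : all (root (pmu eta tau (- nu))) [:: w; Wm; w^*; Wm^*].
    by rewrite /= hw hr !root_conj.
  have hu : uniq [:: w; Wm; w^*; Wm^*].
    rewrite /= !inE !negb_or (negbTE hne) /=.
    have n1 : w^* != w by apply: neqIm; rewrite ImJ; lra.
    have n2 : Wm^* != w by apply: neqIm; rewrite ImJ; lra.
    have n3 : w^* != Wm by apply: neqIm; rewrite ImJ; lra.
    have n4 : Wm^* != Wm by apply: neqIm; rewrite ImJ; lra.
    have n5 : w^* != Wm^*.
      by apply: contra hne => /eqP e; apply/eqP; rewrite -(conjcK w) e conjcK.
    by rewrite n5 !(eq_sym w) !(eq_sym Wm) n1 n2 n3 n4.
  have := max_poly_roots (pmu_neq0 _ eta tau (- nu) htau) hall hu.
  have := sizeP _ eta tau (- nu).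
  move=> hs hlt; have := leq_trans hlt hs; by [].
- by rewrite mulfV.
Qed.
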